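(* There exist absolute constants $c_1,c_2>0$ such that for every $n\ge 1$ and every boolean function $f:\{-1,1\}^n\to\{-1,1\}$, $$\mathrm{Ent}(f)< c_1\, I(f)+c_2\sum_{k=1}^{n} I_k(f)\log\frac{1}{I_k(f)},$$ with the convention $I_k(f)\log\frac{1}{I_k(f)}=0$ when $I_k(f)=0$.
   Context: Let $x$ be uniformly distributed on $\{-1,1\}^n$. For $k\in[n]$, $\mu_k:\{-1,1\}^n\to\{-1,1\}^n$ flips the $k$-th coordinate. The influence of coordinate $k$ is $I_k(f)=\mathbb{P}_x[f(x)\neq f(\mu_k(x))]$ and the total influence is $I(f)=\sum_{k=1}^n I_k(f)$. For $S\subseteq[n]$ let $X_S(x)=\prod_{k\in S}x_k$ and $\hat f(S)=\mathbb{E}_x[f(x)X_S(x)]$ (Fourier–Walsh coefficients). The Fourier entropy is $\mathrm{Ent}(f)=\sum_{S\subseteq[n]}\hat f(S)^2\log_2\frac{1}{\hat f(S)^2}$ (terms with $\hat f(S)=0$ are $0$). *)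

(* Defs.v *)
From Stdlib Require Import Rdefinitions Rpower.
From HB Require Import structures.
From mathcomp Require Import all_boot all_order all_algebra.
From mathcomp Require Import Rstruct.
Set Implicit Arguments. Unset Strict Implicit. Unset Printing Implicit Defensive.
Import Order.TTheory GRing.Theory Num.Theory.
Local Open Scope ring_scope.

(* A point of {-1,1}^n, encoded by n booleans: true <-> -1, false <-> 1. *)
Definition cube (n : nat) := {ffun 'I_n -> bool}.

Definition coord n (x : cube n) (k : 'I_n) : R := if x k then -1 else 1.

Definition flip n (k : 'I_n) (x : cube n) : cube n :=
  [ffun i => if i == k then ~~ x i else x i].

Definition is_boolean n (f : cube n -> R) : Prop :=
  forall x, f x = 1 \/ f x = -1.

Definition prob n (A : {set cube n}) : R := #|A|%:R / (2 ^ n)%:R.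

Definition infl n (f : cube n -> R) (k : 'I_n) : R :=
  prob [set x : cube n | f x != f (flip k x)].

Definition total_infl n (f : cube n -> R) : R := \sum_(k < n) infl f k.

Definition chi n (S : {set 'I_n}) (x : cube n) : R := \prod_(k in S) coord x k.

Definition fourier n (f : cube n -> R) (S : {set 'I_n}) : R :=
  (\sum_(x : cube n) f x * chi S x) / (2 ^ n)%:R.

Definition log2 (x : R) : R := ln x / ln 2.

Definition fourier_entropy n (f : cube n -> R) : R :=
  \sum_(S : {set 'I_n})
     (let a := fourier f S ^+ 2 in if a == 0 then 0 else a * log2 (1 / a)).

Definition xlog_inv (t : R) : R := if t == 0 then 0 else t * ln (1 / t).

(* Main.v *)
Require Import Defs.
From Stdlib Require Import Rdefinitions Rpower Rbase Rfunctions Exp_prop.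
From HB Require Import structures.
From mathcomp Require Import all_boot all_order all_algebra.
From mathcomp Require Import Rstruct.
From mathcomp Require Import ring lra.
Set Implicit Arguments. Unset Strict Implicit. Unset Printing Implicit Defensive.
Import Order.TTheory GRing.Theory Num.Theory.
Local Open Scope ring_scope.

Lemma lnM (x y : R) : 0 < x -> 0 < y -> ln (x * y) = ln x + ln y.
Proof. by move=> /RltP hx /RltP hy; rewrite ln_mult. Qed.

Lemma ln1' : ln 1 = 0.
Proof. exact: ln_1. Qed.

Lemma ln_le_sub1 (x : R) : 0 < x -> ln x <= x - 1.
Proof.
move=> /RltP hx; have := exp_ineq1_le (ln x); rewrite exp_ln // => /RleP.
rewrite RplusE R1E; lra.
Qed.

Lemma ln_inv1 (x : R) : 0 < x -> ln (Rdiv 1 x) = - ln x.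
Proof. by move=> /RltP hx; rewrite /Rdiv Rmult_1_l ln_Rinv. Qed.

Lemma ln2_gt0 : 0 < ln 2.
Proof.
apply/RltP; exact: (Rlt_trans _ _ _ (Rinv_0_lt_compat 2 Rlt_0_2) ln_lt_2).
Qed.

Lemma ln_prod (I : finType) (P : pred I) (F : I -> R) :
  (forall i, P i -> 0 < F i) ->
  0 < \prod_(i | P i) F i /\ ln (\prod_(i | P i) F i) = \sum_(i | P i) ln (F i).
Proof.
move=> hF; apply: (big_rec2 (fun a b => 0 < a /\ ln a = b)).
  by rewrite ln1'.
move=> i a b Pi [ha hb]; split; first by rewrite mulr_gt0 // hF.
by rewrite lnM ?hF // hb.
Qed.

Lemma sum_prod_set n (a b : 'I_n -> R) :
  \sum_(S : {set 'I_n}) \prod_k (if k \in S then a k else b k) = \prod_k (a k + b k).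
Proof. by rewrite bigA_distr. Qed.

Lemma card_cube n : #|cube n| = (2 ^ n)%N.
Proof. by rewrite card_ffun card_bool card_ord. Qed.

Lemma N_neq0 n : (2 ^ n)%:R != 0 :> R.
Proof. by rewrite pnatr_eq0 expn_eq0. Qed.

Lemma N_gt0 n : 0 < (2 ^ n)%:R :> R.
Proof. by rewrite ltr0n expn_gt0. Qed.

Lemma coord_sq n (x : cube n) k : Defs.coord x k * Defs.coord x k = 1.
Proof. by rewrite /Defs.coord; case: (x k); rewrite ?mulrNN mulr1. Qed.

Lemma sum_chi n (x y : cube n) :
  \sum_(S : {set 'I_n}) chi S x * chi S y = if x == y then (2 ^ n)%:R else 0.
Proof.
have -> : \sum_(S : {set 'I_n}) chi S x * chi S y =
   \sum_(S : {set 'I_n}) \prod_k (if k \in S then Defs.coord x k * Defs.coord y k else 1).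
  apply: eq_bigr => S _; rewrite /chi -big_split /= -big_mkcond /=.
  by [].
rewrite sum_prod_set; case: eqP => [<-|/eqP nxy].
  under eq_bigr do rewrite coord_sq.
  by rewrite prodr_const card_ord natrX.
have [k hk] : exists k, x k != y k.
  case: (pickP (fun k => x k != y k)) => [k hk|h]; first by exists k.
  exfalso; apply: (negP nxy); apply/eqP/ffunP => i.
  by have /negbFE/eqP := h i.
rewrite (bigD1 k) //= {1 2}/Defs.coord; move: hk.
by case: (x k); case: (y k) => //= _; rewrite ?mulrN1 ?mulN1r ?addNr ?mul0r.
Qed.

Lemma parseval n (g : cube n -> R) :
  \sum_(S : {set 'I_n}) fourier g S ^+ 2 = (\sum_x g x ^+ 2) / (2 ^ n)%:R.
Proof.
set N := (2 ^ n)%:R : R.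
have hN : N != 0 by exact: N_neq0.
rewrite /fourier.
have -> : \sum_(S : {set 'I_n}) ((\sum_x g x * chi S x) / N) ^+ 2 =
   (\sum_(S : {set 'I_n}) \sum_x \sum_y (g x * chi S x) * (g y * chi S y)) / (N * N).
  rewrite mulr_suml; apply: eq_bigr => S _.
  rewrite expr2 -big_distrlr /=; field; exact: hN.
rewrite exchange_big /=.
under eq_bigr do rewrite exchange_big /=.
have -> : \sum_x \sum_y \sum_(S : {set 'I_n}) (g x * chi S x) * (g y * chi S y)
   = \sum_x g x ^+ 2 * N.
  apply: eq_bigr => x _.
  rewrite (bigD1 x) //= [X in _ + X]big1 ?addr0.
    have -> : \sum_(S : {set 'I_n}) g x * chi S x * (g x * chi S x) =
      g x * g x * \sum_(S : {set 'I_n}) chi S x * chi S x.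
      rewrite mulr_sumr; apply: eq_bigr => S _; ring.
    by rewrite sum_chi eqxx expr2.
  move=> y hy.
  have -> : \sum_(S : {set 'I_n}) g x * chi S x * (g y * chi S y) =
      g x * g y * \sum_(S : {set 'I_n}) chi S x * chi S y.
    rewrite mulr_sumr; apply: eq_bigr => S _; ring.
  by rewrite sum_chi eq_sym (negbTE hy) mulr0.
rewrite -mulr_suml; field; exact: hN.
Qed.

Lemma flipK n (k : 'I_n) : involutive (flip k).
Proof.
move=> x; apply/ffunP => i; rewrite !ffunE; case: eqP => // _; exact: negbK.
Qed.

Lemma chi_flip n (k : 'I_n) S x :
  chi S (flip k x) = if k \in S then - chi S x else chi S x.
Proof.
have hc i : Defs.coord (flip k x) i = if i == k then - Defs.coord x i else Defs.coord x i.
  rewrite /Defs.coord ffunE; case: eqP => _ //; case: (x i) => //=; by rewrite ?opprK.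
rewrite /chi; case: ifP => hk.
  rewrite (bigD1 k) //= [in RHS](bigD1 k) //= hc eqxx mulNr; congr (- (_ * _)).
  by apply: eq_bigr => i /andP [_ hi]; rewrite hc (negbTE hi).
apply: eq_bigr => i hi; rewrite hc; case: eqP => // eik.
by rewrite -eik hi in hk.
Qed.

Definition gk n (f : cube n -> R) (k : 'I_n) (x : cube n) : R :=
  GRing.mul (f x - f (flip k x)) (GRing.inv (1 + 1)).

Lemma fourier_gk n (f : cube n -> R) k S :
  fourier (gk f k) S = if k \in S then fourier f S else 0.
Proof.
rewrite /fourier /gk.
have e : \sum_x f (flip k x) * chi S x = \sum_x f x * chi S (flip k x).
  rewrite [RHS](reindex_inj (inv_inj (@flipK n k))) /=.
  by apply: eq_bigr => x _; rewrite flipK.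
have -> : \sum_x (f x - f (flip k x)) / (1 + 1) * chi S x =
   ((\sum_x f x * chi S x) - \sum_x f (flip k x) * chi S x) / (1 + 1).
  rewrite -sumrB mulr_suml; apply: eq_bigr => x _; ring.
rewrite e; under [X in _ - X]eq_bigr do rewrite chi_flip.
case: ifP => hk.
  under [X in _ - X]eq_bigr do rewrite mulrN.
  rewrite sumrN opprK; congr (_ / _); field; try (apply/eqP; lra); try done.
rewrite [X in _ - X](eq_bigr (fun x => f x * chi S x)); last by move=> x _.
by rewrite subrr mul0r RdivE mul0r.
Qed.

Lemma infl_sum n (f : cube n -> R) k : is_boolean f ->
  infl f k = \sum_(S : {set 'I_n} | k \in S) fourier f S ^+ 2.
Proof.
move=> hb.
have -> : \sum_(S : {set 'I_n} | k \in S) fourier f S ^+ 2 =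
  \sum_(S : {set 'I_n}) fourier (gk f k) S ^+ 2.
  rewrite big_mkcond /=; apply: eq_bigr => S _; rewrite fourier_gk.
  by case: ifP => //; rewrite expr0n.
rewrite parseval /infl /prob; congr (_ / _).
have -> : \sum_x gk f k x ^+ 2 =
  \sum_(x in [set x : cube n | f x != f (flip k x)]) (GRing.one R).
  rewrite [RHS]big_mkcond; apply: eq_bigr => x _; rewrite inE /gk.
  have h1 : (1 != -1 :> R) = true by apply/eqP; lra.
  have h2 : (-1 != 1 :> R) = true by apply/eqP; lra.
  case: (hb x) => ->; case: (hb (flip k x)) => ->; rewrite ?eqxx ?h1 ?h2 /=;
    field; try (apply/eqP; lra); try done.
by rewrite sumr_const.
Qed.

Lemma sum_w n (f : cube n -> R) : is_boolean f ->
  \sum_(S : {set 'I_n}) fourier f S ^+ 2 = 1.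
Proof.
move=> hb; rewrite parseval.
have -> : \sum_x f x ^+ 2 = \sum_(x : cube n) 1.
  by apply: eq_bigr => x _; case: (hb x) => ->; rewrite ?expr1n ?sqrrN ?expr1n.
by rewrite sumr_const card_cube divff // N_neq0.
Qed.

Lemma ln_invr (x : R) : 0 < x -> ln (x^-1) = - ln x.
Proof. by move=> /RltP hx; rewrite -RinvE ln_Rinv. Qed.

Lemma gibbs_pt (w q L : R) : 0 <= w -> 0 <= q -> (0 < w -> 0 < q /\ ln q = - L) ->
  (if w == 0 then 0 else w * - ln w) <= w * L + q - w.
Proof.
move=> hw hq hqL; case: eqP => [->|/eqP w0].
  by rewrite mul0r add0r subr0.
have wp : 0 < w by rewrite lt_def w0 hw.
have [qp lq] := hqL wp.
have h1 : ln (GRing.mul q w^-1) <= q / w - 1 by apply: ln_le_sub1; rewrite divr_gt0.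
rewrite lnM ?invr_gt0 // ln_invr // in h1.
have h2 : w * (ln q + - ln w) <= w * (q / w - 1) by rewrite ler_wpM2l.
have e : w * (q / w - 1) = q - w by field; rewrite w0.
rewrite e in h2.
have -> : L = - ln q by rewrite lq opprK.
nra.
Qed.

Lemma binent (p : R) : 0 <= p -> p <= 1 ->
  p * - ln p + (1 - p) * - ln (GRing.add 1 (- p)) <= p + xlog_inv p.
Proof.
move=> h0 h1; rewrite /xlog_inv; case: eqP => [->|/eqP p0].
  by rewrite mul0r subr0 ln1' oppr0 mulr0 !add0r.
have pp : 0 < p by rewrite lt_def p0 h0.
rewrite ln_inv1 //.
suff : (1 - p) * - ln (1 - p) <= p by lra.
have [->|p1] := eqVneq p 1; first by rewrite subrr mul0r.
have qp : 0 < 1 - p by rewrite subr_gt0 lt_def eq_sym p1 h1.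
have h := ln_le_sub1 (x := (1 - p)^-1) (ltac:(by rewrite invr_gt0)).
rewrite ln_invr // in h.
have h2 := ler_wpM2l (ltW qp) h.
have e : (1 - p) * ((1 - p)^-1 - 1) = p by field; rewrite lt0r_neq0.
by rewrite e in h2.
Qed.

Lemma le_sum_term (I : finType) (P : pred I) (F : I -> R) i :
  P i -> (forall j, P j -> 0 <= F j) -> F i <= \sum_(j | P j) F j.
Proof.
move=> Pi hF; rewrite (bigD1 i) //= lerDl; apply: sumr_ge0 => j /andP [Pj _].
exact: hF.
Qed.

Lemma main_ineq n (f : cube n -> R) : is_boolean f ->
  \sum_(S : {set 'I_n}) (if fourier f S ^+ 2 == 0 then 0
                         else fourier f S ^+ 2 * - ln (fourier f S ^+ 2))
  <= \sum_(k < n) (infl f k + xlog_inv (infl f k)).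
Proof.
move=> hb.
set w := fun S : {set 'I_n} => fourier f S ^+ 2.
set p := fun k : 'I_n => infl f k.
have w0 S : 0 <= w S by rewrite /w sqr_ge0.
have sw : \sum_(S : {set 'I_n}) w S = 1 by exact: sum_w.
have pe k : p k = \sum_(S : {set 'I_n} | k \in S) w S by rewrite /p infl_sum.
have pc k : 1 - p k = \sum_(S : {set 'I_n} | k \notin S) w S.
  by rewrite -sw (bigID (fun S : {set 'I_n} => k \in S)) /= pe addrC addrK.
have wp (S : {set 'I_n}) (k : 'I_n) : k \in S -> w S <= p k.
  by move=> hS; rewrite pe; apply: le_sum_term.
have wc (S : {set 'I_n}) (k : 'I_n) : k \notin S -> w S <= 1 - p k.
  by move=> hS; rewrite pc; apply: le_sum_term.
have p0 k : 0 <= p k by rewrite pe sumr_ge0.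
have p1 k : p k <= 1 by rewrite -subr_ge0 pc sumr_ge0.
set fac := fun (k : 'I_n) (S : {set 'I_n}) => if k \in S then p k else 1 - p k.
have fac0 (k : 'I_n) (S : {set 'I_n}) : 0 <= fac k S by rewrite /fac; case: ifP => _; rewrite ?subr_ge0.
set q := fun S => \prod_k fac k S.
set L := fun S => \sum_k - ln (fac k S).
have sq : \sum_(S : {set 'I_n}) q S = 1.
  rewrite /q /fac sum_prod_set; apply: big1 => k _; ring.
have step : forall S, (if w S == 0 then 0 else w S * - ln (w S)) <= w S * L S + q S - w S.
  move=> S; apply: gibbs_pt => //; first by rewrite /q prodr_ge0.
  move=> wS.
  have hf k : 0 < fac k S.
    rewrite /fac; case: ifP => hk.
      exact: (lt_le_trans wS (wp S k hk)).
    by apply: (lt_le_trans wS (wc S k _)); rewrite hk.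
  have [qp lq] := ln_prod (P := xpredT) (F := fun k => fac k S) (fun k _ => hf k).
  by split => //; rewrite /q lq /L sumrN opprK.
apply: le_trans (ler_sum _ (fun S _ => step S)) _.
rewrite sumrB big_split /= sq sw addrK.
rewrite /L; under eq_bigr do rewrite mulr_sumr.
rewrite exchange_big /=; apply: ler_sum => k _.
rewrite (bigID (fun S : {set 'I_n} => k \in S)) /=.
have e1 : \sum_(S : {set 'I_n} | k \in S) w S * - ln (fac k S) = p k * - ln (p k).
  by rewrite {1}pe mulr_suml; apply: eq_bigr => S hS; rewrite /fac hS.
have e2 : \sum_(S : {set 'I_n} | k \notin S) w S * - ln (fac k S) =
    (1 - p k) * - ln (GRing.add 1 (- p k)).
  by rewrite {1}pc mulr_suml; apply: eq_bigr => S hS; rewrite /fac (negbTE hS).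
rewrite e1 e2; exact: binent.
Qed.

Theorem theorem1p3 :
  exists c1 c2 : R, 0 < c1 /\ 0 < c2 /\
    forall (n : nat), (0 < n)%N ->
    forall f : cube n -> R, is_boolean f ->
      fourier_entropy f <=
        c1 * total_infl f + c2 * \sum_(k < n) xlog_inv (infl f k).
Proof.
have l2 := ln2_gt0.
exists (ln 2)^-1, (ln 2)^-1; split; first by rewrite invr_gt0.
split; first by rewrite invr_gt0.
move=> n _ f hb.
rewrite /total_infl -mulrDr -big_split /=.
have -> : fourier_entropy f = (ln 2)^-1 *
  \sum_(S : {set 'I_n}) (if fourier f S ^+ 2 == 0 then 0
                         else fourier f S ^+ 2 * - ln (fourier f S ^+ 2)).
  rewrite /fourier_entropy mulr_sumr; apply: eq_bigr => S _ /=.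
  case: eqP => [_|/eqP w0]; first by rewrite mulr0.
  have wp : 0 < fourier f S ^+ 2 by rewrite lt_def w0 sqr_ge0.
  rewrite /log2 RdivE ln_inv1 //; ring.
apply: ler_wpM2l; [by rewrite invr_ge0 ltW | exact: main_ineq].
Qed.
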